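(* Let $L$ be a frame and $f\in\overline{\mathrm{H}}(L)$. Then for all $r,s\in\mathbb{Q}$: (1) $f(r,\textsf{---})=\bigvee_{p>r}f(\textsf{---},p)^\ast=\bigvee_{p>r}f(p,\textsf{---})^{\ast\ast}$; (2) $f(\textsf{---},s)=\bigvee_{q<s}f(q,\textsf{---})^\ast=\bigvee_{q<s}f(\textsf{---},q)^{\ast\ast}$.
   Context: $\mathbb{Q}$ is the rationals; $a^\ast$ denotes the pseudocomplement of $a$ in a frame. The frame $\mathfrak{L}(\overline{\mathbb{IR}})$ is presented by generators $(r,\textsf{---})$, $(\textsf{---},s)$ ($r,s\in\mathbb{Q}$) subject to (r1) $(r,\textsf{---})\wedge(\textsf{---},s)=0$ whenever $r\ge s$; (r3) $(r,\textsf{---})=\bigvee_{s>r}(s,\textsf{---})$; (r4) $(\textsf{---},s)=\bigvee_{r<s}(\textsf{---},r)$. $\overline{\mathrm{IC}}(L)$ is the set of frame homomorphisms $\mathfrak{L}(\overline{\mathbb{IR}})\to L$, and $\overline{\mathrm{H}}(L)$ (Hausdorff continuous extended functions) is the set of $f\in\overline{\mathrm{IC}}(L)$ with $f(r,\textsf{---})^\ast\le f(\textsf{---},s)$ and $f(\textsf{---},s)^\ast\le f(r,\textsf{---})$ for all $r<s$ in $\mathbb{Q}$. *)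

(* Defs.v *)
From mathcomp Require Import all_boot all_order all_algebra.
Set Implicit Arguments. Unset Strict Implicit. Unset Printing Implicit Defensive.
Import Order.TTheory GRing.Theory Num.Theory.

Record frame := Frame {
  fcar :> Type;
  fle : fcar -> fcar -> Prop;
  fmeet : fcar -> fcar -> fcar;
  fsup : (fcar -> Prop) -> fcar;
  fle_refl : forall a, fle a a;
  fle_trans : forall a b c, fle a b -> fle b c -> fle a c;
  fle_anti : forall a b, fle a b -> fle b a -> a = b;
  fmeet_lel : forall a b, fle (fmeet a b) a;
  fmeet_ler : forall a b, fle (fmeet a b) b;
  fmeet_glb : forall a b c, fle c a -> fle c b -> fle c (fmeet a b);
  fsup_ub : forall (S : fcar -> Prop) a, S a -> fle a (fsup S);
  fsup_lub : forall (S : fcar -> Prop) b, (forall a, S a -> fle a b) -> fle (fsup S) b;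
  fmeet_sup_distr : forall a (S : fcar -> Prop),
    fmeet a (fsup S) = fsup (fun x => exists2 s, S s & x = fmeet a s)
}.

Section FrameOps.
Variable L : frame.
Definition fbot : L := fsup (fun _ : L => False).
Definition ftop : L := fsup (fun _ : L => True).
Definition pcompl (a : L) : L := fsup (fun x => fmeet x a = fbot).
Definition fjoin {I : Type} (P : I -> Prop) (g : I -> L) : L :=
  fsup (fun x => exists2 i, P i & x = g i).
End FrameOps.

Local Open Scope ring_scope.

(* A frame homomorphism f : L(IR-bar) -> L is determined, by the universal
   property of the presentation, by its values on the generators
   (r,---) |-> lo r and (---,s) |-> up s, subject to (r1),(r3),(r4). *)
Record IC (L : frame) := MkIC {
  lo : rat -> L;
  up : rat -> L;
  ic_r1 : forall r s : rat, s <= r -> fmeet (lo r) (up s) = fbot L;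
  ic_r3 : forall r : rat, lo r = fjoin (fun s : rat => r < s) lo;
  ic_r4 : forall s : rat, up s = fjoin (fun r : rat => r < s) up
}.

Definition isH (L : frame) (f : IC L) : Prop :=
  forall r s : rat, r < s ->
    fle (pcompl (lo f r)) (up f s) /\ fle (pcompl (up f s)) (lo f r).

(* Main.v *)
Require Import Defs.
From mathcomp Require Import all_boot all_order all_algebra.
Import Order.TTheory GRing.Theory Num.Theory.
Set Implicit Arguments. Unset Strict Implicit.
Local Open Scope ring_scope.

Section Aux.
Variable L : frame.
Implicit Types a b x : L.

Lemma bot_le a : fle (fbot L) a.
Proof. apply: fsup_lub => ? []. Qed.

Lemma le_bot a : fle a (fbot L) -> a = fbot L.
Proof. move=> h; apply: fle_anti => //; exact: bot_le. Qed.

Lemma meetC a b : fmeet a b = fmeet b a.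
Proof.
apply: fle_anti; apply: fmeet_glb; (apply: fmeet_ler || apply: fmeet_lel).
Qed.

Lemma meet_pc a : fmeet a (pcompl a) = fbot L.
Proof.
apply: le_bot; rewrite /pcompl fmeet_sup_distr; apply: fsup_lub => y [x hx ->].
by rewrite meetC hx; apply: fle_refl.
Qed.

Lemma pc_ub x a : fmeet x a = fbot L -> fle x (pcompl a).
Proof. move=> h; apply: fsup_ub; exact: h. Qed.

Lemma meet_mono x y a : fle x y -> fle (fmeet x a) (fmeet y a).
Proof.
move=> h; apply: fmeet_glb; last exact: fmeet_ler.
apply: fle_trans h; exact: fmeet_lel.
Qed.

Lemma le_pc x a : fle x (pcompl a) -> fmeet x a = fbot L.
Proof.
move=> h; apply: le_bot; apply: fle_trans (meet_mono a h) _.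
rewrite meetC meet_pc; apply: fle_refl.
Qed.

Lemma pc_anti a b : fle a b -> fle (pcompl b) (pcompl a).
Proof.
move=> h; apply: pc_ub; apply: le_bot.
rewrite meetC; apply: fle_trans (meet_mono (pcompl b) h) _.
rewrite meet_pc; apply: fle_refl.
Qed.

Lemma pc_pc a : fle a (pcompl (pcompl a)).
Proof. apply: pc_ub; exact: meet_pc. Qed.

Lemma fjoin_ub (I : Type) (P : I -> Prop) (g : I -> L) i :
  P i -> fle (g i) (fjoin P g).
Proof. move=> hi; apply: fsup_ub; by exists i. Qed.

Lemma fjoin_lub (I : Type) (P : I -> Prop) (g : I -> L) b :
  (forall i, P i -> fle (g i) b) -> fle (fjoin P g) b.
Proof. move=> h; apply: fsup_lub => y [i hi ->]; exact: h. Qed.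
End Aux.

Lemma dense (x y : rat) : x < y -> exists m, x < m /\ m < y.
Proof. move=> h; exists ((x + y) / 2); by case: (midf_lt h). Qed.

Theorem lemma3p4 (L : frame) (f : IC L) (Hf : isH f) :
  forall r s : rat,
    (lo f r = fjoin (fun p : rat => r < p) (fun p => pcompl (up f p)) /\
     lo f r = fjoin (fun p : rat => r < p) (fun p => pcompl (pcompl (lo f p))))
 /\ (up f s = fjoin (fun q : rat => q < s) (fun q => pcompl (lo f q)) /\
     up f s = fjoin (fun q : rat => q < s) (fun q => pcompl (pcompl (up f q)))).
Proof.
have lomono : forall r q : rat, r < q -> fle (lo f q) (lo f r).
  by move=> r q h; rewrite [X in fle _ X](ic_r3 f r); apply: fjoin_ub.
have upmono : forall s q : rat, q < s -> fle (up f q) (up f s).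
  by move=> s q h; rewrite [X in fle _ X](ic_r4 f s); apply: fjoin_ub.
have lo_pc : forall p : rat, fle (lo f p) (pcompl (up f p)).
  by move=> p; apply: pc_ub; apply: ic_r1.
have up_pc : forall p : rat, fle (up f p) (pcompl (lo f p)).
  by move=> p; apply: pc_ub; rewrite meetC; apply: ic_r1.
have A1 : forall r p : rat, r < p -> fle (pcompl (up f p)) (lo f r).
  move=> r p h; have [m [h1 h2]] := dense h.
  apply: fle_trans (proj2 (Hf _ _ h2)) _; exact: lomono.
have A2 : forall s q : rat, q < s -> fle (pcompl (lo f q)) (up f s).
  move=> s q h; have [m [h1 h2]] := dense h.
  apply: fle_trans (proj1 (Hf _ _ h1)) _; exact: upmono.
move=> r s; split; split.
- apply: fle_anti.
  + rewrite [X in fle X _](ic_r3 f r); apply: fjoin_lub => p hp.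
    apply: fle_trans (lo_pc p) _; exact: (fjoin_ub (fun p => pcompl (up f p))).
  + apply: fjoin_lub => p hp; exact: A1.
- apply: fle_anti.
  + rewrite [X in fle X _](ic_r3 f r); apply: fjoin_lub => p hp.
    apply: fle_trans (pc_pc _) _.
    exact: (fjoin_ub (fun p => pcompl (pcompl (lo f p)))).
  + apply: fjoin_lub => p hp.
    apply: fle_trans (pc_anti (up_pc p)) _; exact: A1.
- apply: fle_anti.
  + rewrite [X in fle X _](ic_r4 f s); apply: fjoin_lub => p hp.
    apply: fle_trans (up_pc p) _; exact: (fjoin_ub (fun p => pcompl (lo f p))).
  + apply: fjoin_lub => p hp; exact: A2.
- apply: fle_anti.
  + rewrite [X in fle X _](ic_r4 f s); apply: fjoin_lub => p hp.
    apply: fle_trans (pc_pc _) _.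
    exact: (fjoin_ub (fun p => pcompl (pcompl (up f p)))).
  + apply: fjoin_lub => p hp.
    apply: fle_trans (pc_anti (lo_pc p)) _; exact: A2.
Qed.
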